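(* Let $p$ be a prime, $q=p^m$, $1\le r<p$, and let $d(p,m,r)$ be as defined in the context. For every $f(x)\in\mathbb{F}_q[x]$ with $1\le\deg f\le r$, the number $N_f$ of rational places of the function field $E_f=\mathbb{F}_q(x,y)$, $y^p-y=f(x)$, satisfies $$N_f\le 1+p\,(q-d(p,m,r)).$$ Moreover, there exists a polynomial $h(x)\in\mathbb{F}_q[x]$ of degree at most $r$ such that $N_h=1+p\,(q-d(p,m,r))$.
   Context: Enumerate $\mathbb{F}_q^*=\{\alpha_1,\dots,\alpha_{q-1}\}$ and fix an $\mathbb{F}_p$-linear isomorphism $\mathbb{F}_q\cong\mathbb{F}_p^m$. Let $A\in\mathbb{F}_p^{rm\times(q-1)}$ be the matrix whose $j$-th column is the concatenation of the coordinate vectors of $\alpha_j,\alpha_j^2,\dots,\alpha_j^r$. Let $C\subseteq\mathbb{F}_p^{q-1}$ be the row space of $A$ over $\mathbb{F}_p$, and $d(p,m,r)$ the minimum Hamming distance of $C$ (independent of the choices, up to code equivalence). A rational place is a place of degree one; equivalently $N_f=1+p\cdot|\{\beta\in\mathbb{F}_q:\mathrm{Tr}_{\mathbb{F}_q/\mathbb{F}_p}(f(\beta))=0\}|$. *)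

(* Defs.v *)
From mathcomp Require Import all_boot all_order all_algebra all_field.
Set Implicit Arguments.
Unset Strict Implicit.
Unset Printing Implicit Defensive.
Import GRing.Theory.
Local Open Scope ring_scope.

Section Code.
Variables (p m r : nat) (F : finFieldType).

Definition trace (x : F) : F := \sum_(i < m) x ^+ (p ^ i).

(* number of rational places of y^p - y = f(x):
   N_f = 1 + p * #{ beta in F_q : Tr(f(beta)) = 0 } *)
Definition Nplaces (f : {poly F}) : nat :=
  (1 + p * #|[set b : F | trace f.[b] == 0%R]|)%N.

Definition Fstar : {set F} := [set x : F | x != 0].
Definition alpha (j : 'I_#|Fstar|) : F := enum_val j.

Variable phi : F -> 'rV['F_p]_m.  (* the F_p-linear isomorphism F_q ~ F_p^m *)

(* the matrix A: column j is the concatenation of the coordinate vectors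
   of alpha_j, alpha_j^2, ..., alpha_j^r *)
Definition Amat : 'M['F_p]_(\sum_(k < r) m, #|Fstar|) :=
  \mxcol_(k < r) (\matrix_(l < m, j < #|Fstar|) phi (alpha j ^+ k.+1) 0 l).

Definition in_code (c : 'rV['F_p]_#|Fstar|) : bool := (c <= Amat)%MS.

Definition hamming (c1 c2 : 'rV['F_p]_#|Fstar|) : nat :=
  #|[set j | c1 0 j != c2 0 j]|.

Definition dmin : nat :=
  \big[minn/#|Fstar|]_(c : 'rV['F_p]_#|Fstar| * 'rV['F_p]_#|Fstar|
      | [&& in_code c.1, in_code c.2 & c.1 != c.2]) hamming c.1 c.2.

End Code.

(* Main.v *)
Require Import Defs.
From mathcomp Require Import all_boot all_order all_algebra all_field.
Set Implicit Arguments.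
Unset Strict Implicit.
Unset Printing Implicit Defensive.
Import GRing.Theory.
Local Open Scope ring_scope.

Section Iota.
Variables (p : nat) (F : finFieldType).
Hypotheses (pr : prime p) (chF : p \in [pchar F]).

Definition io (k : 'F_p) : F := (k : nat)%:R.

Lemma io_nat n : io (n%:R) = n%:R.
Proof.
rewrite /io val_Fp_nat //.
by rewrite [in RHS](divn_eq n p) natrD natrM (pcharf0 chF) mulr0 add0r.
Qed.

Lemma ioD x y : io (x + y) = io x + io y.
Proof. by rewrite -[x]natr_Zp -[y]natr_Zp -natrD !io_nat natrD. Qed.

Lemma ioM x y : io (x * y) = io x * io y.
Proof. by rewrite -[x]natr_Zp -[y]natr_Zp -natrM !io_nat natrM. Qed.

Lemma io0 : io 0 = 0.
Proof. by rewrite /io. Qed.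

Lemma io_lt (x : 'F_p) : (x < p)%N.
Proof. have := ltn_ord x; move: (x : nat) => k; by rewrite Fp_cast. Qed.

Lemma io_eq0 x : (io x == 0) = (x == 0).
Proof.
apply/idP/idP; last by move/eqP->; rewrite io0.
rewrite /io -(dvdn_pcharf chF) => /dvdn_leq H.
apply/eqP/val_inj => /=; case: (x : nat) (io_lt x) H => //= k lt /(_ isT).
by rewrite leqNgt lt.
Qed.

Lemma io_inj : injective io.
Proof.
move=> x y e; apply/eqP; rewrite -subr_eq0 -io_eq0.
have H := ioD (x - y) y; rewrite subrK e -{1}[io y]add0r in H.
by move/addIr: H => <-.
Qed.

Lemma io_sum I (r : seq I) (P : pred I) (G : I -> 'F_p) :
  io (\sum_(i <- r | P i) G i) = \sum_(i <- r | P i) io (G i).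
Proof. exact: (big_morph _ ioD io0). Qed.

Lemma io_frob k : io k ^+ p = io k.
Proof. by rewrite /io -(pFrobenius_autE chF) rmorph_nat. Qed.

Lemma io_onto (t : F) : t ^+ p = t -> exists k, io k = t.
Proof.
move=> tp; case: (pickP (fun k => io k == t)) => [k /eqP|H]; first by exists k.
exfalso.
pose P : {poly F} := 'X^p - 'X.
have sP : size P = p.+1.
  rewrite /P size_polyDl ?size_polyXn // size_polyN size_polyX.
  by rewrite ltnS prime_gt1.
have P0 : P != 0 by rewrite -size_poly_gt0 sP.
have := @max_poly_roots _ P (t :: map io (enum 'F_p)) P0.
rewrite sP /= size_map -cardE card_Fp // ltnn.
rewrite /root !hornerE tp subrr eqxx /=.
rewrite map_inj_uniq ?enum_uniq ?andbT; last exact: io_inj.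
case: (boolP (t \in _)) => [/mapP [k _ ek]|_].
  by move: (H k); rewrite /= ek eqxx.
move=> K; have /K/(_ isT) // : all (fun x => P.[x] == 0) [seq io i | i <- enum 'F_p].
apply/allP => x /mapP [k _ ->].
by rewrite !hornerE io_frob subrr.
Qed.

End Iota.


Section Trace.
Variables (p m : nat) (F : finFieldType).
Hypotheses (pr : prime p) (chF : p \in [pchar F]) (hq : #|F| = (p ^ m)%N).

Local Notation tr := (trace p m).

Lemma exprDp i (x y : F) : (x + y) ^+ (p ^ i) = x ^+ (p ^ i) + y ^+ (p ^ i).
Proof. apply: exprDn_pchar. rewrite pnatX pnatE // chF. by []. Qed.

Lemma trace0 : tr 0 = 0 :> F.
Proof. by rewrite /trace big1 // => i _; rewrite expr0n eqn0Ngt expn_gt0 prime_gt0. Qed.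

Lemma traceD x y : tr (x + y) = tr x + tr y :> F.
Proof. by rewrite /trace -big_split; apply: eq_bigr => i _; rewrite exprDp. Qed.

Lemma traceN x : tr (- x) = - tr x :> F.
Proof. by apply/eqP; rewrite -addr_eq0 -traceD addNr trace0. Qed.

Lemma traceB x y : tr (x - y) = tr x - tr y :> F.
Proof. by rewrite traceD traceN. Qed.

Lemma trace_sum I (r : seq I) (P : pred I) (G : I -> F) :
  tr (\sum_(i <- r | P i) G i) = \sum_(i <- r | P i) tr (G i).
Proof. exact: (big_morph _ traceD trace0). Qed.

Lemma exprp_fix (t : F) i : t ^+ p = t -> t ^+ (p ^ i) = t.
Proof.
move=> tp; elim: i => [|i IH]; first by rewrite expr1.
by rewrite expnSr exprM IH tp.
Qed.

Lemma traceZ t x : t ^+ p = t -> tr (t * x) = t * tr x :> F.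
Proof.
move=> tp; rewrite /trace mulr_sumr; apply: eq_bigr => i _.
by rewrite exprMn (exprp_fix i tp).
Qed.

Lemma frob_sum I (r : seq I) (P : pred I) (G : I -> F) :
  (\sum_(i <- r | P i) G i) ^+ p = \sum_(i <- r | P i) (G i) ^+ p.
Proof.
rewrite -(pFrobenius_autE chF) rmorph_sum; apply: eq_bigr => i _.
exact: pFrobenius_autE.
Qed.

Lemma trace_frob x : tr x ^+ p = tr x :> F.
Proof.
rewrite /trace frob_sum.
have e : forall i : 'I_m, (x ^+ (p ^ i)) ^+ p = x ^+ (p ^ i.+1).
  by move=> i; rewrite -exprM expnSr.
rewrite (eq_bigr _ (fun i _ => e i)).
have e2 : \sum_(i < m.+1) x^+(p^i) = \sum_(i<m) x^+(p^i) + x^+(p^m) by rewrite big_ord_recr.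
have e3 : \sum_(i < m.+1) x^+(p^i) = x^+(p^0) + \sum_(i<m) x^+(p^i.+1) by rewrite big_ord_recl.
rewrite -hq expf_card in e2; rewrite expn0 expr1 e2 addrC in e3.
by move/addrI: e3.
Qed.

Lemma trace_iota (x : F) : exists k : 'F_p, @io p F k = tr x.
Proof. have := io_onto pr chF (trace_frob x). by []. Qed.

Lemma m_gt0 : (0 < m)%N.
Proof. by have := finNzRing_gt1 F; rewrite hq; case: (m) => //; rewrite expn0. Qed.

Lemma trace_nz : exists y : F, tr y != 0.
Proof.
case: (pickP (fun y : F => tr y != 0)) => [y Hy|H]; first by exists y.
exfalso.
have [m' em] : exists m', m = m'.+1 by case: (m) m_gt0 => // k _; exists k.
pose P : {poly F} := \sum_(i < m) 'X^(p ^ i).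
have PE y : P.[y] = tr y by rewrite /P horner_sum; apply: eq_bigr => i _; rewrite hornerXn.
have p1 : (1 < p)%N by apply: prime_gt1.
have P0 : P != 0.
  apply/eqP => /(congr1 (fun q : {poly F} => q`_(p ^ m'))); rewrite coef0 /P coef_sum.
  have mo : (m' < m)%N by rewrite em.
  rewrite (bigD1 (Ordinal mo)) //= big1 ?addr0.
    by rewrite coefXn eqxx; apply/eqP; rewrite oner_eq0.
  move=> i ne; rewrite coefXn eqn_exp2l //; case: eqP => // e.
  by move: ne; rewrite -(inj_eq val_inj) /= -e eqxx.
have sP : (size P <= (p ^ m').+1)%N.
  apply: leq_trans (size_sum _ _ _) _; apply/bigmax_leqP => i _.
  rewrite size_polyXn ltnS leq_exp2l //; have := ltn_ord i; move: (i : nat) => k; rewrite em.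
  by [].
have Hall : all (root P) (enum F).
  by apply/allP => y _; rewrite /root PE; have := H y => /= /negbFE.
have := max_poly_roots P0 Hall (enum_uniq F).
rewrite -cardE hq em => /leq_trans/(_ sP).
by rewrite ltnS leqNgt ltn_exp2l // ltnSn.
Qed.
Lemma exprp_sum i I (r : seq I) (P : pred I) (G : I -> F) :
  (\sum_(j <- r | P j) G j) ^+ (p ^ i) = \sum_(j <- r | P j) (G j) ^+ (p ^ i).
Proof.
apply: (big_morph (fun z : F => z ^+ (p ^ i))) => [x y|]; first exact: exprDp.
by rewrite expr0n eqn0Ngt expn_gt0 prime_gt0.
Qed.

Lemma trace_poly_nz (g : {poly F}) :
  (1 <= (size g).-1)%N -> ((size g).-1 < p)%N -> exists b, tr g.[b] != 0.
Proof.
move=> D1 Dp.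
case: (pickP (fun y : F => tr g.[y] != 0)) => [y Hy|H]; first by exists y.
exfalso.
have [m' em] : exists m', m = m'.+1 by case: (m) m_gt0 => // k _; exists k.
have p1 : (1 < p)%N by apply: prime_gt1.
set D := (size g).-1 in D1 Dp.
have sg : size g = D.+1 by move: D1; rewrite /D; case: (size g).
pose Q : {poly F} :=
  \sum_(i < m) \sum_(k < size g) (g`_k ^+ (p ^ i)) *: 'X^(k * p ^ i).
have QE y : Q.[y] = tr g.[y].
  rewrite /Q horner_sum /trace; apply: eq_bigr => i _.
  rewrite horner_sum (horner_coef g y) exprp_sum; apply: eq_bigr => k _.
  by rewrite hornerZ hornerXn exprMn exprM.
have Q0 : Q != 0.
  apply/eqP => /(congr1 (fun q : {poly F} => q`_D)); rewrite coef0 /Q coef_sum.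
  have m0 : (0 < m)%N by rewrite em.
  rewrite (bigD1 (Ordinal m0)) //= [X in _ + X]big1 ?addr0.
    rewrite coef_sum.
    have kD : (D < size g)%N by rewrite sg.
    rewrite (bigD1 (Ordinal kD)) //= big1 ?addr0.
      rewrite coefZ coefXn expn0 muln1 expr1 eqxx mulr1 => /eqP.
      by rewrite -lead_coefE lead_coef_eq0 -size_poly_eq0 sg.
    move=> k ne; rewrite coefZ coefXn expn0 muln1; case: eqP; last by rewrite mulr0.
    by move=> e; move: ne; rewrite -(inj_eq val_inj) /= -e eqxx.
  move=> i ne; rewrite coef_sum big1 // => k _; rewrite coefZ coefXn.
  case: eqP; last by rewrite mulr0.
  have i0 : (i : nat) != 0%N by move: ne; rewrite -(inj_eq val_inj).
  case: (k : nat) => [|k'] e; first by move: D1; rewrite e mul0n.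
  exfalso; move: Dp; rewrite e leqNgt ltnS.
  have : (p <= p ^ i)%N by rewrite -{1}(expn1 p) leq_exp2l // lt0n.
  by move=> h; rewrite mulSn (leq_trans h (leq_addr _ _)).
have sQ : (size Q <= (D * p ^ m').+1)%N.
  apply: leq_trans (size_sum _ _ _) _; apply/bigmax_leqP => i _.
  apply: leq_trans (size_sum _ _ _) _; apply/bigmax_leqP => k _.
  apply: leq_trans (size_scale_leq _ _) _.
  rewrite size_polyXn ltnS leq_mul //.
    by have := ltn_ord k; move: (k : nat) => k0; rewrite sg.
  rewrite leq_exp2l //; have := ltn_ord i; move: (i : nat) => j; rewrite em.
  by [].
have Hall : all (root Q) (enum F).
  by apply/allP => y _; rewrite /root QE; have := H y => /= /negbFE.
have := max_poly_roots Q0 Hall (enum_uniq F).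
rewrite -cardE hq em => /leq_trans/(_ sQ).
rewrite ltnS expnS leq_pmul2r ?expn_gt0 ?prime_gt0 //.
by rewrite leqNgt Dp.
Qed.

End Trace.


Section Dual.
Variables (p m : nat) (F : finFieldType) (phi : F -> 'rV['F_p]_m) (phiinv : 'rV['F_p]_m -> F).
Hypotheses (pr : prime p) (chF : p \in [pchar F]) (hq : #|F| = (p ^ m)%N).
Hypotheses (phiD : {morph phi : x y / x + y}) (phiK : cancel phi phiinv) (phiinvK : cancel phiinv phi).

Local Notation tr := (trace p m).
Local Notation io := (@io p F).

Lemma phi0 : phi 0 = 0.
Proof. have h := phiD 0 0; rewrite addr0 -{1}[phi 0]addr0 in h; by move/addrI: h. Qed.

Lemma phiinvD u v : phiinv (u + v) = phiinv u + phiinv v.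
Proof. by apply: (can_inj phiK); rewrite phiD !phiinvK. Qed.

Lemma phiinv0 : phiinv 0 = 0.
Proof. by apply: (can_inj phiK); rewrite phiinvK phi0. Qed.

Lemma phiinv_sum I (r : seq I) (P : pred I) (G : I -> 'rV['F_p]_m) :
  phiinv (\sum_(i <- r | P i) G i) = \sum_(i <- r | P i) phiinv (G i).
Proof. exact: (big_morph _ phiinvD phiinv0). Qed.

Lemma phiinvZ k v : phiinv (k *: v) = io k * phiinv v.
Proof.
rewrite /io; have -> : k *: v = v *+ k by rewrite -{1}[k]natr_Zp scaler_nat.
elim: (k : nat) => [|n IH]; first by rewrite mulr0n phiinv0 mul0r.
by rewrite mulrS phiinvD IH !mulr_natl -mulrS.
Qed.

Lemma expand x : x = \sum_l io (phi x 0 l) * phiinv 'e_l.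
Proof.
rewrite -{1}(phiK x) {1}(row_sum_delta (phi x)) phiinv_sum.
by apply: eq_bigr => l _; rewrite phiinvZ.
Qed.

Definition pickk (t : F) : 'F_p := odflt 0 [pick k | io k == t].

Lemma pickkP t : t ^+ p = t -> io (pickk t) = t.
Proof.
move=> tp; rewrite /pickk; case: pickP => [k /eqP //|H].
by have [k e] := io_onto pr chF tp; move: (H k); rewrite /= e eqxx.
Qed.

Definition ua (a : F) : 'rV['F_p]_m := \row_l pickk (tr (a * phiinv 'e_l)).

Lemma dual1 a x : tr (a * x) = io (\sum_l phi x 0 l * ua a 0 l).
Proof.
rewrite (io_sum pr chF) {1}(expand x) mulr_sumr (trace_sum m pr chF).
apply: eq_bigr => l _; rewrite mulrCA (traceZ m _ (io_frob chF _)) (ioM pr chF) mxE pickkP //.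
exact: (trace_frob chF hq).
Qed.

Lemma ua_inj : injective ua.
Proof.
move=> a b e; apply/eqP; rewrite -subr_eq0; apply/negPn/negP => ne.
have [y Hy] := trace_nz pr hq.
have := dual1 a ((a - b)^-1 * y); rewrite e -dual1 => /eqP.
rewrite -subr_eq0 -(traceB m pr chF) -mulrBl mulrA mulfV // mul1r.
by rewrite (negPf Hy).
Qed.

Lemma dual2 u : exists a, ua a = u.
Proof.
have : u \in codom ua.
  apply: (inj_card_onto ua_inj).
  by rewrite card_mx card_Fp // hq mul1n.
by move=> /codomP [a ->]; exists a.
Qed.

End Dual.


Section Code.
Variables (p m r : nat) (F : finFieldType) (phi : F -> 'rV['F_p]_m).

Local Notation n := #|Fstar F|.

Definition Bk (k : 'I_r) : 'M['F_p]_(m, n) :=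
  \matrix_(l < m, j < n) phi (alpha j ^+ k.+1) 0 l.

Definition cw (U : 'I_r -> 'rV['F_p]_m) : 'rV['F_p]_n := \sum_k U k *m Bk k.

Lemma cw_code U : in_code r phi (cw U).
Proof. by rewrite /in_code /cw /Amat -mul_mxrow_mxcol submxMl. Qed.

Lemma code_cw c : in_code r phi c -> exists U, c = cw U.
Proof.
case/submxP => u ->; exists (fun k => submxrow u k).
by rewrite /cw -mul_mxrow_mxcol submxrowK.
Qed.

Lemma cw_entry U j : cw U 0 j = \sum_(k < r) \sum_(l < m) phi (alpha j ^+ k.+1) 0 l * U k 0 l.
Proof.
rewrite /cw summxE; apply: eq_bigr => k _; rewrite mxE; apply: eq_bigr => l _.
by rewrite mxE mulrC.
Qed.

Lemma zero_entry (j : 'I_n) : (0 : 'rV['F_p]_n) 0 j = 0.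
Proof. by rewrite mxE. Qed.

Lemma card_Fstar : n = #|F|.-1.
Proof.
rewrite -(cardsC1 (0 : F)); apply: eq_card => x; by rewrite !inE.
Qed.

Lemma Zcount (tr : F -> F) (h : {poly F}) (c : 'rV['F_p]_n) :
  tr h.[0] == 0 ->
  (forall j, (c 0 j == 0) = (tr h.[alpha j] == 0)) ->
  #|[set b | tr h.[b] == 0]| = (#|F| - hamming c 0)%N.
Proof.
move=> h0 hc.
have -> : #|[set b | tr h.[b] == 0]| = (\sum_b (tr h.[b] == 0%R : nat))%N.
  by rewrite -sum1_card big_mkcond /=; apply: eq_bigr => b _; rewrite inE; case: ifP.
rewrite (bigD1 0) //= h0.
have -> : (\sum_(b | b != 0%R) (tr h.[b] == 0%R : nat))%N =
          (\sum_(b in Fstar F) (tr h.[b] == 0%R : nat))%N.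
  by apply: eq_bigl => b; rewrite inE.
rewrite big_enum_val.
have -> : hamming c 0 = (\sum_(j < n) (c ord0 j != 0%R : nat))%N.
  rewrite /hamming -sum1_card big_mkcond /=; apply: eq_bigr => j _.
  by rewrite inE zero_entry; case: ifP.
have e : (\sum_(j < n) (c ord0 j == 0%R : nat) + \sum_(j < n) (c ord0 j != 0%R : nat))%N = n.
  rewrite -big_split /=; transitivity (\sum_(j < n) 1)%N.
    by apply: eq_bigr => j _; case: (c ord0 j == 0).
  by rewrite sum_nat_const card_ord muln1.
have -> : (\sum_(i < n) (tr h.[enum_val i] == 0%R : nat))%N = (\sum_(j < n) (c ord0 j == 0%R : nat))%N.
  by apply: eq_bigr => j _; rewrite hc.
have Fn : #|F| = n.+1 by rewrite card_Fstar prednK // (cardD1 (0 : F)).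
rewrite Fn; move: e; move: (\sum_(j < n) _)%N (\sum_(j < n) _)%N => a b <- /=.
by rewrite -addSn addnK.
Qed.

End Code.


Section Main.
Variables (p m r : nat) (F : finFieldType) (phi : F -> 'rV['F_p]_m) (phiinv : 'rV['F_p]_m -> F).
Hypotheses (pr : prime p) (chF : p \in [pchar F]) (hq : #|F| = (p ^ m)%N).
Hypotheses (r1 : (1 <= r)%N) (rp : (r < p)%N).
Hypotheses (phiD : {morph phi : x y / x + y}) (phiK : cancel phi phiinv) (phiinvK : cancel phiinv phi).

Local Notation n := #|Fstar F|.
Local Notation tr := (trace p m).
Local Notation io := (@io p F).

Lemma dmin_le (c1 c2 : 'rV['F_p]_n) : in_code r phi c1 -> in_code r phi c2 -> c1 != c2 ->
  (dmin r phi <= hamming c1 c2)%N.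
Proof.
move=> h1 h2 h3; rewrite /dmin -minEnat.
have := @Order.TotalTheory.bigmin_le_cond _ _ _ n (c1,c2) (fun c => [&& in_code r phi c.1, in_code r phi c.2 & c.1 != c.2]) (fun c => hamming c.1 c.2).
rewrite /= h1 h2 h3 => /(_ isT). by [].
Qed.

Lemma ham_le (c1 c2 : 'rV['F_p]_n) : (hamming c1 c2 <= n)%N.
Proof. by rewrite /hamming (leq_trans (max_card _)) // card_ord. Qed.

Lemma dmin_att (c0 : 'rV['F_p]_n) : in_code r phi c0 -> c0 != 0 ->
  exists c, [/\ in_code r phi c, c != 0 & hamming c 0 = dmin r phi].
Proof.
move=> h0 n0; rewrite /dmin -minEnat.
pose PP := (fun c : 'rV['F_p]_n * 'rV['F_p]_n => [&& in_code r phi c.1, in_code r phi c.2 & c.1 != c.2]).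
have P0 : PP (c0, (0 : 'rV['F_p]_n)) by rewrite /PP /= h0 n0 /in_code sub0mx.
have [i0 Pi0 ->] := @Order.TotalTheory.eq_bigmin _ _ _ n (c0, 0) PP (fun c => hamming c.1 c.2) P0 (fun i _ => ham_le i.1 i.2).
case: i0 Pi0 => c1 c2; rewrite /PP /= => /and3P [h1 h2 h3]; simpl in h1, h2, h3.
exists (c1 - c2); split.
- move: h1 h2; rewrite /in_code => /submxP [u1 ->] /submxP [u2 ->].
  by rewrite -mulmxBl submxMl.
- by rewrite subr_eq0.
- rewrite /hamming; apply: eq_card => j; rewrite !inE !mxE subr_eq0.
  by [].
Qed.

Lemma cw_ua (a : 'I_r -> F) j :
  io (cw phi (fun k => ua phiinv (a k)) 0 j) = tr (\sum_(k < r) a k * alpha j ^+ k.+1).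
Proof.
rewrite cw_entry (io_sum pr chF) (trace_sum m pr chF); apply: eq_bigr => k _.
by rewrite (dual1 pr chF hq phiD phiK phiinvK).
Qed.

Definition hpoly (a : 'I_r -> F) : {poly F} := \sum_(k < r) a k *: 'X^(k.+1).

Lemma hpolyE a x : (hpoly a).[x] = \sum_(k < r) a k * x ^+ k.+1.
Proof. by rewrite /hpoly horner_sum; apply: eq_bigr => k _; rewrite hornerZ hornerXn. Qed.

Lemma hpoly0 a : (hpoly a).[0] = 0.
Proof. by rewrite hpolyE big1 // => k _; rewrite expr0n mulr0. Qed.

Lemma hpoly_size a : ((size (hpoly a)).-1 <= r)%N.
Proof.
have : (size (hpoly a) <= r.+1)%N.
  apply: leq_trans (size_sum _ _ _) _; apply/bigmax_leqP => k _.
  apply: leq_trans (size_scale_leq _ _) _.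
  by rewrite size_polyXn ltnS ltn_ord.
by case: (size _).
Qed.

Lemma Nplaces_cw a (c : 'rV['F_p]_n) : c = cw phi (fun k => ua phiinv (a k)) ->
  Nplaces p m (hpoly a) = (1 + p * (#|F| - hamming c 0))%N.
Proof.
move=> ec; rewrite /Nplaces (@Zcount p F (@trace p m F) (hpoly a) c) //.
  by rewrite hpoly0 (trace0 m F pr).
move=> j; rewrite -(io_eq0 pr chF) ec cw_ua hpolyE.
by [].
Qed.

Lemma part1 (f : {poly F}) : (1 <= (size f).-1 <= r)%N ->
  (Nplaces p m f <= 1 + p * (p ^ m - dmin r phi))%N.
Proof.
move=> /andP [D1 Dr].
rewrite /Nplaces leq_add2l leq_mul2l; apply/orP; right.
case: (pickP (fun t : F => tr f.[t] == 0)) => [t ft|H0]; last first.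
  have -> : #|[set b | tr f.[b] == 0]| = 0%N by apply: eq_card0 => b; rewrite inE H0.
  by [].
pose g := f \Po ('X + t%:P) - (f.[t])%:P.
have gE b : g.[b] = f.[b + t] - f.[t] by rewrite /g !hornerE horner_comp !hornerE.
have gT b : tr g.[b] = tr f.[b + t] by rewrite gE (traceB m pr chF) (eqP ft) subr0.
have -> : #|[set b | tr f.[b] == 0]| = #|[set b | tr g.[b] == 0]|.
  have -> : [set b | tr g.[b] == 0] = (fun b => b + t) @^-1: [set b | tr f.[b] == 0].
    by apply/setP => b; rewrite !inE gT.
  by rewrite card_preimset //; apply: addIr.
have sg : size g = size f.
  have sc : size (f \Po ('X + t%:P)) = size f by rewrite size_comp_poly2 // size_XaddC.
  rewrite /g size_polyDl sc // size_polyN (leq_ltn_trans (size_polyC_leq1 _)) //.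
  by move: D1; case: (size f) => [|[|k]].
have g0 : g.[0] = 0 by rewrite gE add0r subrr.
pose a (k : 'I_r) := g`_k.+1.
have gsum x : g.[x] = \sum_(k < r) a k * x ^+ k.+1.
  rewrite (@horner_coef_wide _ r.+1 g x); last by rewrite sg; move: Dr; case: (size f).
  rewrite big_ord_recl /= expr0 mulr1 -horner_coef0 g0 add0r.
  by apply: eq_bigr => k _; rewrite /a.
pose c := cw phi (fun k => ua phiinv (a k)).
have hc j : (c 0 j == 0) = (tr g.[alpha j] == 0) by rewrite -(io_eq0 pr chF) cw_ua gsum.
rewrite (@Zcount p F (@trace p m F) g c) ?g0 ?(trace0 m F pr) //.
have cn0 : c != 0.
  apply/eqP => c0.
  have [b Hb] : exists b, tr g.[b] != 0.
    by apply: (trace_poly_nz pr chF hq); rewrite sg // (leq_ltn_trans Dr rp).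
  case: (eqVneq b 0) => [b0|bn0].
    by move: Hb; rewrite b0 g0 (trace0 m F pr) eqxx.
  have bF : b \in Fstar F by rewrite inE.
  have := hc (enum_rank_in bF b); rewrite c0 mxE eqxx /alpha (enum_rankK_in bF bF).
  by rewrite (negPf Hb).
have z0 : in_code r phi 0 by rewrite /in_code sub0mx.
have := dmin_le (cw_code phi _) z0 cn0.
rewrite hq => dle; exact: leq_sub2l.
Qed.

Lemma part2 : exists h : {poly F}, ((size h).-1 <= r)%N /\ Nplaces p m h = (1 + p * (p ^ m - dmin r phi))%N.
Proof.
have [y Hy] := trace_nz pr hq.
have yn0 : y != 0 by apply: contraNneq Hy => ->; rewrite (trace0 m F pr).
pose e1 (k : 'I_r) : F := (k == Ordinal r1)%:R.
pose c0 := cw phi (fun k => ua phiinv (e1 k)).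
have hsum x : \sum_(k < r) e1 k * x ^+ k.+1 = x.
  rewrite (bigD1 (Ordinal r1)) //= big1 ?addr0 /e1 => [|k /negPf ->].
    by rewrite eqxx mul1r expr1.
  by rewrite mul0r.
have cn0 : c0 != 0.
  apply/eqP => c00; have yF : y \in Fstar F by rewrite inE.
  have := cw_ua e1 (enum_rank_in yF y); rewrite hsum /alpha (enum_rankK_in yF yF) -/c0 c00 mxE io0.
  by move=> e; move: Hy; rewrite -e eqxx.
have [c [cc cn hc]] := dmin_att (cw_code phi _) cn0.
have [U eU] := code_cw cc.
pose a (k : 'I_r) : F := odflt 0 [pick a | ua phiinv a == U k].
have ua_a k : ua phiinv (a k) = U k.
  rewrite /a; case: pickP => [b /eqP //|H].
  have [b eb] := dual2 pr chF hq phiD phiK phiinvK (U k).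
  by move: (H b); rewrite /= eb eqxx.
exists (hpoly a); split; first exact: hpoly_size.
rewrite (@Nplaces_cw a c) ?hc ?hq //.
by rewrite eU /cw; apply: eq_bigr => k _; rewrite ua_a.
Qed.

End Main.


Theorem theorem4p3 (p m r : nat) (F : finFieldType) (phi : F -> 'rV['F_p]_m) :
  prime p -> p \in [pchar F] -> #|F| = (p ^ m)%N ->
  (1 <= r)%N -> (r < p)%N ->
  {morph phi : x y / x + y} -> bijective phi ->
  (forall f : {poly F}, (1 <= (size f).-1 <= r)%N ->
     (Nplaces p m f <= 1 + p * (p ^ m - dmin r phi))%N) /\
  (exists h : {poly F}, ((size h).-1 <= r)%N /\
     Nplaces p m h = (1 + p * (p ^ m - dmin r phi))%N).
Proof.
move=> pr chF hq r1 rp phiD [phiinv phiK phiinvK]; split.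
  by move=> f; apply: (part1 pr chF hq rp phiD phiK phiinvK).
exact: (part2 pr chF hq r1 phiD phiK phiinvK).
Qed.
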